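(* Let $A\in\mathbb{R}^{n\times n}$ and $B\in\mathbb{R}^{n\times m}$ with $\rho(|A|)<1$, and let $T$ be a positive integer. Let $i,j\in\{1,\dots,n\}$, $i\neq j$, and $w\in\mathbb{R}$ be such that $\rho(|A|+|w|e_je_i^{\top})<1$. Then $$\log\det(\mathcal{W}_A)\le\sigma n\log\Big(\frac{\operatorname{tr}(\mathcal{W}_A)}{n^{1/\sigma}}\Big)\le\sigma n\log\Big(\frac{\operatorname{tr}(\mathcal{H}_{\mathcal{X}})}{n^{1/\sigma}}\Big),$$ with $\sigma=1$ if $\operatorname{tr}(\mathcal{W}_A)\le1$ and $\sigma=2$ if $\operatorname{tr}(\mathcal{W}_A)>1$; and, with $\tau=(1+\alpha\beta)\operatorname{tr}(\mathcal{H}_{\mathcal{X}})+\alpha^2\gamma\bar\gamma$, $$\log\det(\mathcal{W}_{A+we_je_i^{\top}})\le\sigma n\log\Big(\frac{\tau}{n^{1/\sigma}}\Big),$$ with $\sigma=1$ if $\tau\le1$ and $\sigma=2$ if $\tau>1$.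
   Context: $|\cdot|$ is taken entrywise; $\rho$ is the spectral radius; $e_k$ is the $k$-th canonical unit vector; $\|\cdot\|$ is the Euclidean norm. For $Z\in\mathbb{R}^{n\times n}$, $\mathcal{W}_Z=\sum_{t=0}^{T-1}Z^tBB^{\top}(Z^t)^{\top}$ (the paper assumes controllability, so Gramians are positive definite). Define $\mathcal{X}=(I-|A|)^{-1}$, $\mathcal{H}_{\mathcal{X}}=\mathcal{X}|B||B|^{\top}\mathcal{X}^{\top}$, $\alpha_{pq}=\frac{|w|}{1-|w|e_p^{\top}\mathcal{X}e_q}$, $\alpha=\max_{p\neq q}\alpha_{pq}$, $\beta=\max\{\max_{p\neq q}2e_p^{\top}\mathcal{X}e_q,\ \max_{p\neq q}e_p^{\top}\mathcal{X}e_q+\max_{q}\|\mathcal{X}e_q\|\}$, $\gamma=\max_k e_k^{\top}\mathcal{X}^{\top}\mathcal{X}e_k$, $\bar\gamma=\max_k e_k^{\top}\mathcal{X}|B||B|^{\top}\mathcal{X}^{\top}e_k$. *)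

(* Defs.v *)
From HB Require Import structures.
From mathcomp Require Import all_boot all_order all_algebra.
From mathcomp Require Import all_classical all_reals all_analysis.
From mathcomp Require Import complex.
Set Implicit Arguments. Unset Strict Implicit. Unset Printing Implicit Defensive.
Import Order.TTheory GRing.Theory Num.Theory.
Local Open Scope ring_scope.
Local Open Scope classical_set_scope.

Section Defs.
Variable R : realType.

Definition absmx (p q : nat) (M : 'M[R]_(p, q)) : 'M[R]_(p, q) :=
  map_mx (fun x => `|x|) M.

Definition spectral_radius (n : nat) (M : 'M[R]_n) : R :=
  sup [set Normc.normc z | z in
        [set z : R[i] | eigenvalue (map_mx (fun x => (x%:C)%C) M) z]].

Definition e_ (n : nat) (k : 'I_n) : 'cV[R]_n := delta_mx k 0.

Definition gramian (n m T : nat) (Z : 'M[R]_n) (B : 'M[R]_(n, m)) : 'M[R]_n :=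
  \sum_(t < T) (Z ^+ t *m B *m B^T *m (Z ^+ t)^T).

(* (Z,B) controllable over horizon T: [B, ZB, ..., Z^(T-1)B] has rank n,
   i.e. the columns of the Z^t B span R^n *)
Definition controllable (n m T : nat) (Z : 'M[R]_n) (B : 'M[R]_(n, m)) : bool :=
  row_full (\sum_(t < T) <<(Z ^+ t *m B)^T>>)%MS.

Definition Xmx (n : nat) (A : 'M[R]_n) : 'M[R]_n := invmx (1%:M - absmx A).

Definition HX (n m : nat) (A : 'M[R]_n) (B : 'M[R]_(n, m)) : 'M[R]_n :=
  Xmx A *m absmx B *m (absmx B)^T *m (Xmx A)^T.

Definition Xent (n : nat) (A : 'M[R]_n) (p q : 'I_n) : R :=
  ((e_ p)^T *m Xmx A *m e_ q) ord0 ord0.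

Definition alpha_pq (n : nat) (A : 'M[R]_n) (w : R) (p q : 'I_n) : R :=
  `|w| / (1 - `|w| * Xent A p q).

(* Maxima over nonempty finite index sets: the neutral element of the
   big max is chosen as one member of the set (the pair (j,i), resp. i),
   so the big operator is exactly the maximum. *)
Definition alpha (n : nat) (A : 'M[R]_n) (w : R) (i j : 'I_n) : R :=
  \big[Num.max/alpha_pq A w j i]_(pq : 'I_n * 'I_n | pq.1 != pq.2)
     alpha_pq A w pq.1 pq.2.


Definition colnorm (n : nat) (A : 'M[R]_n) (q : 'I_n) : R :=
  Num.sqrt (\sum_(k < n) ((Xmx A *m e_ q) k ord0) ^+ 2).

Definition beta (n : nat) (A : 'M[R]_n) (i j : 'I_n) : R :=
  let maxX := \big[Num.max/Xent A j i]_(pq : 'I_n * 'I_n | pq.1 != pq.2)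
                 Xent A pq.1 pq.2 in
  let maxN := \big[Num.max/colnorm A i]_(q < n) colnorm A q in
  Num.max (\big[Num.max/2 * Xent A j i]_(pq : 'I_n * 'I_n | pq.1 != pq.2)
               (2 * Xent A pq.1 pq.2))
          (maxX + maxN).

Definition gamma (n : nat) (A : 'M[R]_n) (i : 'I_n) : R :=
  let g k := ((e_ k)^T *m (Xmx A)^T *m Xmx A *m e_ k) ord0 ord0 in
  \big[Num.max/g i]_(k < n) g k.

Definition gammabar (n m : nat) (A : 'M[R]_n) (B : 'M[R]_(n, m)) (i : 'I_n) : R :=
  let g k := ((e_ k)^T *m Xmx A *m absmx B *m (absmx B)^T *m (Xmx A)^T *m e_ k)
               ord0 ord0 in
  \big[Num.max/g i]_(k < n) g k.

Definition sigma_of (x : R) : R := if x <= 1 then 1 else 2.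

Definition bound (n : nat) (sg x : R) : R :=
  sg * n%:R * ln (x / (n%:R `^ sg^-1)).

End Defs.
Arguments e_ {R n} k.

(* Main.v *)
Require Import Defs.
From HB Require Import structures.
From mathcomp Require Import all_boot all_order all_algebra.
From mathcomp Require Import all_classical all_reals all_analysis.
From mathcomp Require Import complex.
From mathcomp Require Import ring lra.
Set Implicit Arguments. Unset Strict Implicit. Unset Printing Implicit Defensive.
Import Order.TTheory GRing.Theory Num.Theory.
Local Open Scope ring_scope.

Lemma exists_max (T : realDomainType) n (F : 'I_n.+1 -> T) : exists a0, forall a, F a <= F a0.
Proof.
case: (@arg_maxP _ _ _ ord0 xpredT F isT) => a0 _ H.
by exists a0 => a; apply: H.
Qed.

Section PA.
Variable R : realType.

Definition rsb p q (M : 'M[R]_(p, q)) (c : R) := forall a, \sum_b `|M a b| <= c.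
Definition nnm p q (M : 'M[R]_(p, q)) := forall a b, 0 <= M a b.

Lemma rsb_mul p q r (A : 'M[R]_(p, q)) (B : 'M[R]_(q, r)) a b :
  rsb A a -> rsb B b -> 0 <= b -> rsb (A *m B) (a * b).
Proof.
move=> hA hB hb i.
apply: (@le_trans _ _ (\sum_c \sum_k `|A i k| * `|B k c|)).
  apply: ler_sum => c _; rewrite mxE.
  apply: (le_trans (ler_norm_sum _ _ _)); apply: ler_sum => k _.
  by rewrite normrM.
rewrite exchange_big /=.
apply: (@le_trans _ _ (\sum_k `|A i k| * b)).
  apply: ler_sum => k _; rewrite -mulr_sumr; apply: ler_wpM2l => //.
rewrite -mulr_suml; apply: ler_wpM2r => //.
Qed.

Lemma inj_unit n (A : 'M[R]_n) :
  (forall v : 'rV[R]_n, v *m A = 0 -> v = 0) -> A \in unitmx.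
Proof.
move=> H; rewrite -row_free_unit -kermx_eq0; apply/eqP/row_matrixP => i.
rewrite row0; apply: H; by rewrite -row_mul mulmx_ker row0.
Qed.

Lemma neumann_unit n (N : 'M[R]_n) q : rsb N q -> q < 1 -> (1%:M - N) \in unitmx.
Proof.
move=> hN hq; apply: inj_unit => v hv.
have ev : v = v *m N by apply/eqP; rewrite -subr_eq0 -{1}(mulmx1 v) -mulmxBr hv.
have hs : \sum_b `|v 0 b| <= q * \sum_b `|v 0 b|.
  apply: (@le_trans _ _ (\sum_b \sum_a `|v 0 a| * `|N a b|)).
    apply: ler_sum => b _; rewrite {1}ev mxE.
    apply: (le_trans (ler_norm_sum _ _ _)); apply: ler_sum => a _.
    by rewrite normrM.
  rewrite exchange_big /= mulr_sumr; apply: ler_sum => a _.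
  by rewrite -mulr_sumr mulrC; apply: ler_wpM2r.
have s0 : \sum_b `|v 0 b| = 0.
  apply/eqP; rewrite eq_le sumr_ge0 // andbT.
  have : 0 <= \sum_b `|v 0 b| by rewrite sumr_ge0.
  move: hs; set s := \sum_b _ => hs h0.
  have : (1 - q) * s <= 0 by rewrite mulrBl mul1r subr_le0.
  by rewrite pmulr_rle0 // subr_gt0.
apply/rowP => b; rewrite mxE; apply/eqP; rewrite -normr_eq0.
move/eqP: s0; rewrite psumr_eq0 // => /allP /(_ b) /=; rewrite mem_index_enum.
by move/(_ isT).
Qed.



Lemma neumann_bound n (N : 'M[R]_n) q : rsb N q -> q < 1 ->
  rsb (invmx (1%:M - N)) (1 - q)^-1.
Proof.
move=> hN hq; have hu := neumann_unit hN hq.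
set Y := invmx _.
have eY : Y = 1%:M + N *m Y.
  have : (1%:M - N) *m Y = 1%:M by rewrite mulmxV.
  by rewrite mulmxBl mul1mx => <-; rewrite subrK.
case: n N hN hu Y eY => [|n] N hN hu Y eY a; first by case: a.
have [a0 ha0] := exists_max (fun a => \sum_b `|Y a b|).
have key : forall a, \sum_b `|Y a b| <= 1 + q * \sum_b `|Y a0 b|.
  move=> a1.
  apply: (@le_trans _ _ (\sum_b (`|(1%:M : 'M[R]_n.+1) a1 b| + \sum_k `|N a1 k| * `|Y k b|))).
    apply: ler_sum => b _; rewrite {1}eY mxE.
    apply: (le_trans (ler_normD _ _)); apply: lerD => //.
    rewrite mxE; apply: (le_trans (ler_norm_sum _ _ _)); apply: ler_sum => k _.
    by rewrite normrM.
  rewrite big_split /=; apply: lerD.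
    rewrite (bigD1 a1) //= big1 ?mxE ?eqxx ?normr1 ?addr0 //.
    by move=> b hb; rewrite mxE eq_sym (negbTE hb) normr0.
  rewrite exchange_big /=.
  apply: (@le_trans _ _ (\sum_k `|N a1 k| * \sum_b `|Y a0 b|)).
    apply: ler_sum => k _; rewrite -mulr_sumr; apply: ler_wpM2l => //.
  rewrite -mulr_suml; apply: ler_wpM2r => //; rewrite sumr_ge0 //.
have h0 := key a0.
have h1 : (1 - q) * \sum_b `|Y a0 b| <= 1.
  by move: h0; set s := \sum_b _; nra.
apply: (le_trans (ha0 a)).
have hq1 : 0 < 1 - q by rewrite subr_gt0.
by rewrite -(ler_pM2l hq1) mulfV ?gt_eqF.
Qed.

Lemma neumann_nn n (N : 'M[R]_n) q : rsb N q -> q < 1 -> nnm N ->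
  nnm (invmx (1%:M - N)).
Proof.
move=> hN hq hnn; have hu := neumann_unit hN hq.
set Y := invmx _.
have eY : Y = 1%:M + N *m Y.
  have : (1%:M - N) *m Y = 1%:M by rewrite mulmxV.
  by rewrite mulmxBl mul1mx => <-; rewrite subrK.
case: n N hN hnn hu Y eY => [|n] N hN hnn hu Y eY a b; first by case: a.
have [a0 ha0] := exists_max (fun a => - Y a b).
have hge : forall a, Y a0 b <= Y a b by move=> a1; rewrite -lerN2 ha0.
rewrite leNgt; apply/negP => hlt.
have hlt0 : Y a0 b < 0 by apply: le_lt_trans (hge a) hlt.
have h1 : Y a0 b >= \sum_k N a0 k * Y a0 b.
  have e1 := congr1 (fun M : 'M[R]_(n.+1) => M a0 b) eY; rewrite /= !mxE in e1.
  rewrite [X in _ <= X]e1.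
  apply: (@le_trans _ _ (\sum_k N a0 k * Y k b)).
    apply: ler_sum => k _; apply: ler_wpM2l => //.
  by rewrite -[X in X <= _]add0r lerD2r ler0n.
have hr : \sum_k N a0 k <= q.
  apply: le_trans (hN a0); apply: ler_sum => k _; rewrite ger0_norm //.
move: h1; rewrite -mulr_suml => h1.
have : q * Y a0 b <= (\sum_k N a0 k) * Y a0 b by move: hr hlt0; set s := \sum_k _; set y := Y a0 b; nra.
move=> h2; have h3 := le_trans h2 h1.
have : (1 - q) * Y a0 b < 0 by rewrite pmulr_rlt0 // subr_gt0.
by rewrite mulrBl mul1r subr_lt0 ltNge h3.
Qed.
End PA.

Section PB.
Variable R : realType.



Definition Cmx n (M : 'M[R]_n) : 'M[R[i]]_n := map_mx (fun x => (x%:C)%C) M.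

Lemma eig_bound n (M : 'M[R]_n) (z : R[i]) :
  eigenvalue (Cmx M) z -> Normc.normc z <= \sum_a \sum_b `|M a b|.
Proof.
case/eigenvalueP => v hv vn0.
case: n M z v hv vn0 => [|n] M z v hv vn0.
  by case/negP: vn0; apply/eqP/rowP => -[].
have [k hk] := exists_max (fun k => Normc.normc (v 0 k)).
have hvk : 0 < Normc.normc (v 0 k).
  rewrite lt_neqAle; apply/andP; split.
    apply/eqP => h; case/negP: vn0; apply/eqP/rowP => a; rewrite mxE.
    have := hk a; rewrite -h => ha.
    apply: Normc.eq0_normc; apply/eqP; rewrite eq_le ha.
    by case: (v 0 a) => x y /=; rewrite sqrtr_ge0.
  by case: (v 0 k) => x y /=; rewrite sqrtr_ge0.
have e := congr1 (fun w : 'rV[R[i]]_n.+1 => w 0 k) hv; rewrite /= !mxE in e.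
have nrm : forall x : R[i], `|x| = ((Normc.normc x)%:C)%C by [].
have h1 : `|z| * `|v 0 k| <= ((\sum_a `|M a k|)%:C)%C * `|v 0 k|.
  rewrite -normrM -e.
  apply: (le_trans (ler_norm_sum _ _ _)).
  rewrite rmorph_sum /= mulr_suml; apply: ler_sum => a _.
  rewrite !mxE normrM mulrC.
  have -> : `|((M a k)%:C)%C| = ((`|M a k|)%:C)%C.
    by rewrite nrm /= expr0n /= addr0 sqrtr_sqr.
  apply: ler_wpM2l; first by rewrite lecR.
  by rewrite !nrm lecR; apply: hk.
have h2 : `|z| <= ((\sum_a `|M a k|)%:C)%C.
  by rewrite -(ler_pM2r (_ : 0 < `|v 0 k|)) // nrm ltcR.
rewrite -lecR -nrm; apply: (le_trans h2); rewrite lecR.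
apply: ler_sum => a _; rewrite (bigD1 k) //= lerDl sumr_ge0 //.
Qed.

Lemma sr_unit n (M : 'M[R]_n) s : spectral_radius M < 1 -> 1 <= s ->
  (s%:M - M) \in unitmx.
Proof.
move=> hsr hs.
have hu : (M - s%:M) \in unitmx.
  apply/negPn/negP => hnu.
  have hev : eigenvalue M s.
    rewrite /eigenvalue /eigenspace kermx_eq0 row_free_unit; exact: hnu.
  have hevC : eigenvalue (Cmx M) ((s%:C)%C).
    rewrite eigenvalue_root_char /Cmx -map_char_poly fmorph_root.
    by rewrite -eigenvalue_root_char.
  have hub : has_ubound [set Normc.normc z | z in [set z : R[i] | eigenvalue (Cmx M) z]].
    exists (\sum_a \sum_b `|M a b|) => x [z hz <-]; exact: eig_bound.
  have := ub_le_sup hub (ex_intro2 _ _ ((s%:C)%C) hevC erefl).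
  rewrite /= expr0n /= addr0 sqrtr_sqr ger0_norm ?(le_trans ler01) // => hle.
  have := lt_le_trans (le_lt_trans hle hsr) hs; by rewrite ltxx.
have -> : s%:M - M = (-1) *: (M - s%:M) by rewrite scaleN1r opprB.
by rewrite unitmxZ // unitrN unitr1.
Qed.
End PB.

Section PC.
Variable R : realType.
Local Open Scope classical_set_scope.

Lemma inv_eq n (P Q : 'M[R]_n) : P *m Q = 1%:M -> invmx P = Q.
Proof.
move=> h; have [hP _] := mulmx1_unit h.
by rewrite -[invmx P]mulmx1 -h mulmxA mulVmx // mul1mx.
Qed.

Lemma nnm_mul p q r (A : 'M[R]_(p, q)) (B : 'M[R]_(q, r)) :
  nnm A -> nnm B -> nnm (A *m B).
Proof.
by move=> hA hB a b; rewrite mxE sumr_ge0 // => k _; rewrite mulr_ge0.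
Qed.

Lemma rsb_le p q (A : 'M[R]_(p, q)) c d : rsb A c -> c <= d -> rsb A d.
Proof. by move=> h hc a; apply: le_trans (h a) hc. Qed.

Lemma rsbZ p q (A : 'M[R]_(p, q)) c K : rsb A K -> rsb (c *: A) (`|c| * K).
Proof.
move=> h a; under eq_bigr => b _ do rewrite mxE normrM.
by rewrite -mulr_sumr ler_wpM2l.
Qed.

Lemma rsb_total p q (A : 'M[R]_(p, q)) : rsb A (\sum_a \sum_b `|A a b|).
Proof.
move=> a; rewrite (bigD1 a) //= lerDl sumr_ge0 // => i _; rewrite sumr_ge0 //.
Qed.

Lemma nnmZ p q (A : 'M[R]_(p, q)) c : 0 <= c -> nnm A -> nnm (c *: A).
Proof. by move=> hc hA a b; rewrite mxE mulr_ge0. Qed.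

Variable n : nat.
Variable M : 'M[R]_n.
Hypothesis Mnn : nnm M.
Hypothesis Munit : forall s, 1 <= s -> (s%:M - M) \in unitmx.

Let Rs s := invmx (s%:M - M).

Lemma Rs_shift s d : 1 <= s -> (s - d)%:M - M = (s%:M - M) *m (1%:M - d *: Rs s).
Proof.
move=> hs; rewrite mulmxBr mulmx1 -scalemxAr mulmxV ?Munit //.
by rewrite raddfB /= scalemx1; rewrite addrAC.
Qed.

Lemma step_down s K d : 1 <= s -> nnm (Rs s) -> rsb (Rs s) K -> 0 <= d ->
  d * K < 1 -> nnm (Rs (s - d)).
Proof.
move=> hs hnn hK hd hdK.
have hN : rsb (d *: Rs s) (d * K) by rewrite -{2}(ger0_norm hd); apply: rsbZ.
have -> : Rs (s - d) = invmx (1%:M - d *: Rs s) *m Rs s.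
  apply: inv_eq; rewrite Rs_shift // -mulmxA (mulmxA (1%:M - _)).
  rewrite mulmxV ?mul1mx ?mulmxV ?Munit //.
  exact: neumann_unit hN hdK.
apply: nnm_mul => //; apply: neumann_nn hN hdK _.
exact: nnmZ.
Qed.

Lemma bound_up s K e : 1 <= s -> rsb (Rs s) K -> 0 <= K -> 0 <= e -> e * K <= 2^-1 ->
  rsb (Rs (s + e)) (2 * K).
Proof.
move=> hs hK hK0 he heK.
have hN : rsb ((- e) *: Rs s) (e * K).
  by rewrite -{2}(ger0_norm he) -normrN; apply: rsbZ.
have heK1 : e * K < 1 by apply: le_lt_trans heK _; rewrite invf_lt1 // ltr1n.
have -> : Rs (s + e) = invmx (1%:M - (- e) *: Rs s) *m Rs s.
  apply: inv_eq; rewrite -{1}(opprK e) Rs_shift // -mulmxA (mulmxA (1%:M - _)).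
  rewrite mulmxV ?mul1mx ?mulmxV ?Munit //.
  exact: neumann_unit hN heK1.
apply: rsb_mul => //; apply: rsb_le (neumann_bound hN heK1) _.
have h1 : 0 < 1 - e * K by rewrite subr_gt0.
rewrite -(ler_pM2r h1) mulVf ?gt_eqF //.
have : 2 * (e * K) <= 1.
  by move: heK; rewrite -(@ler_pM2l _ 2) // mulfV.
lra.
Qed.

Lemma big_good : nnm (Rs (1 + \sum_a \sum_b `|M a b|)).
Proof.
set T := \sum_a \sum_b `|M a b|; set s := 1 + T.
have hT : 0 <= T by rewrite sumr_ge0 // => a _; rewrite sumr_ge0.
have hs : 0 < s by rewrite /s; lra.
have hs1 : 1 <= s by rewrite /s; lra.
have e1 : s%:M - M = s *: (1%:M - s^-1 *: M).
  by rewrite scalerBr scalerA mulfV ?gt_eqF // scale1r scalemx1.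
have hN : rsb (s^-1 *: M) (s^-1 * T).
  by rewrite -{2}(ger0_norm (_ : 0 <= s^-1)) ?invr_ge0 ?ltW //; apply: rsbZ; apply: rsb_total.
have hq : s^-1 * T < 1 by rewrite ltr_pdivrMl // mulr1 /s; lra.
rewrite /Rs e1 invmxZ -?e1 ?Munit //.
apply: nnmZ; first by rewrite invr_ge0 ltW.
apply: neumann_nn hN hq _; apply: nnmZ => //; by rewrite invr_ge0 ltW.
Qed.

Lemma good1 : nnm (Rs 1).
Proof.
pose S := [set s : R | 1 <= s /\ nnm (Rs s)].
have hne : S !=set0 by exists (1 + \sum_a \sum_b `|M a b|); split;
  [rewrite lerDl sumr_ge0 // => a _; rewrite sumr_ge0 | exact: big_good].
have hlb : has_lbound S by exists 1 => x [].
have hinf : has_inf S by [].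
set s0 := inf S.
have hs0 : 1 <= s0 by apply: lb_le_inf => // x [].
set K0 := 1 + \sum_a \sum_b `|Rs s0 a b|.
have hK0 : 0 < K0.
  by rewrite /K0 ltr_pwDl // sumr_ge0 // => a _; rewrite sumr_ge0.
have hRK : rsb (Rs s0) K0 by apply: rsb_le (rsb_total _) _; rewrite /K0 lerDr.
set eps := (4 * K0)^-1.
have heps : 0 < eps by rewrite invr_gt0 mulr_gt0.
have epsK : eps * K0 = 4^-1.
  by rewrite /eps invfM -mulrA mulVf ?gt_eqF // mulr1.
have [s1 [hs1 hnn1] hlt] := inf_adherent heps hinf.
have hge : s0 <= s1 by apply: ge_inf.
have hb1 : rsb (Rs s1) (2 * K0).
  have -> : s1 = s0 + (s1 - s0) by rewrite addrC subrK.
  apply: bound_up => //; first by rewrite ltW.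
    by rewrite subr_ge0.
  have : (s1 - s0) * K0 <= eps * K0 by rewrite ler_pM2r //; lra.
  rewrite epsK => h; apply: le_trans h _; rewrite lef_pV2 ?posrE //; lra.
have h2 : forall d, 0 <= d -> d <= eps -> d * (2 * K0) < 1.
  move=> d hd hde; have : d * K0 <= eps * K0 by rewrite ler_pM2r.
  by rewrite epsK; lra.
have [hc|hc] := lerP (s1 - eps) 1.
  have := @step_down s1 (2 * K0) (s1 - 1) hs1 hnn1 hb1.
  have -> : s1 - (s1 - 1) = 1 by lra.
  apply.
    by rewrite subr_ge0.
  by apply: h2; rewrite ?subr_ge0 //; lra.
have hS : S (s1 - eps).
  split; first exact: ltW.
  by apply: step_down hs1 hnn1 hb1 (ltW heps) (h2 _ (ltW heps) (lexx _)).
have := ge_inf hlb hS; rewrite -/s0; lra.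
Qed.
End PC.

Section PD.
Variable R : realType.

Definition frob p q (C : 'M[R]_(p, q)) := \sum_a \sum_b C a b ^+ 2.
Definition le_abs p q (Z M : 'M[R]_(p, q)) := forall a b, `|Z a b| <= M a b.

Lemma tr_frob p q (C : 'M[R]_(p, q)) : \tr (C *m C^T) = frob C.
Proof.
rewrite /mxtrace /frob; apply: eq_bigr => a _; rewrite mxE.
by apply: eq_bigr => b _; rewrite mxE expr2.
Qed.

Lemma le_abs_mul p q r (A A' : 'M[R]_(p, q)) (B B' : 'M[R]_(q, r)) :
  le_abs A A' -> le_abs B B' -> le_abs (A *m B) (A' *m B').
Proof.
move=> hA hB a b; rewrite !mxE; apply: (le_trans (ler_norm_sum _ _ _)).
apply: ler_sum => k _; rewrite normrM; apply: ler_pM => //.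
Qed.

Lemma le_abs_exp n (Z M : 'M[R]_n) t : le_abs Z M -> le_abs (Z ^+ t) (M ^+ t).
Proof.
move=> h; elim: t => [|t IH].
  by move=> a b; rewrite !expr0 !mxE; case: (a == b); rewrite ?normr1 ?normr0.
by rewrite !exprS; apply: le_abs_mul.
Qed.

Lemma le_abs_abs p q (B : 'M[R]_(p, q)) : le_abs B (absmx B).
Proof. by move=> a b; rewrite mxE. Qed.

Lemma frob_le p q (C D : 'M[R]_(p, q)) : le_abs C D -> frob C <= frob D.
Proof.
move=> h; apply: ler_sum => a _; apply: ler_sum => b _.
rewrite -real_normK ?num_real //; apply: lerXn2r; rewrite ?nnegrE //.
exact: le_trans (h a b).
Qed.

Lemma sum_sq_le T (x : 'I_T -> R) : (forall t, 0 <= x t) ->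
  \sum_t x t ^+ 2 <= (\sum_t x t) ^+ 2.
Proof.
elim: T x => [|T IH] x hx; first by rewrite !big_ord0 expr0n.
rewrite !big_ord_recr /=.
have h1 := IH (fun t => x (widen_ord (leqnSn T) t)) (fun t => hx _).
have h2 : 0 <= \sum_(i < T) x (widen_ord (leqnSn T) i) by rewrite sumr_ge0.
have h3 := hx ord_max.
move: h1 h2 h3; set S := \sum_(i < T) _; set Q := \sum_(i < T) _; set y := x _.
nra.
Qed.

Lemma frob_sum T p q (P : 'I_T -> 'M[R]_(p, q)) : (forall t, nnm (P t)) ->
  \sum_t frob (P t) <= frob (\sum_t P t).
Proof.
move=> hP; rewrite /frob exchange_big /=; apply: ler_sum => a _.
rewrite exchange_big /=; apply: ler_sum => b _.
rewrite summxE; apply: sum_sq_le => t; exact: hP.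
Qed.

Lemma gram_eq n m T (Z : 'M[R]_n) (B : 'M[R]_(n, m)) :
  gramian T Z B = \sum_(t < T) ((Z ^+ t *m B) *m (Z ^+ t *m B)^T).
Proof.
by apply: eq_bigr => t _; rewrite trmx_mul !mulmxA.
Qed.

Lemma geom n (M : 'M[R]_n) T : (1%:M - M) *m (\sum_(t < T) M ^+ t) = 1%:M - M ^+ T.
Proof.
elim: T => [|T IH]; first by rewrite big_ord0 mulmx0 expr0 -scalemx1 scale1r subrr.
rewrite big_ord_recr /= mulmxDr IH mulmxBl mul1mx.
by rewrite exprS addrA subrK.
Qed.

Lemma nnm_sum T p q (P : 'I_T -> 'M[R]_(p, q)) : (forall t, nnm (P t)) -> nnm (\sum_t P t).
Proof. by move=> h a b; rewrite summxE; apply: sumr_ge0 => t _; apply: h. Qed.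

Lemma nnm_exp n (M : 'M[R]_n) t : nnm M -> nnm (M ^+ t).
Proof.
move=> h; elim: t => [|t IH]; first by move=> a b; rewrite expr0 mxE; case: (a == b).
by rewrite exprS; apply: nnm_mul.
Qed.

Lemma nnm_abs p q (B : 'M[R]_(p, q)) : nnm (absmx B).
Proof. by move=> a b; rewrite mxE. Qed.

Lemma gram_trace_bound n m T (Z M : 'M[R]_n) (B : 'M[R]_(n, m)) :
  le_abs Z M -> (1%:M - M) \in unitmx -> nnm (invmx (1%:M - M)) ->
  \tr (gramian T Z B) <= frob (invmx (1%:M - M) *m absmx B).
Proof.
move=> hZ hu hX.
have hM : nnm M by move=> a b; apply: le_trans (hZ a b).
rewrite gram_eq raddf_sum /=.
under eq_bigr => t _ do rewrite tr_frob.
apply: (@le_trans _ _ (\sum_(t < T) frob (M ^+ t *m absmx B))).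
  apply: ler_sum => t _; apply: frob_le; apply: le_abs_mul.
    exact: le_abs_exp.
  exact: le_abs_abs.
apply: (le_trans (frob_sum _)).
  by move=> t; apply: nnm_mul; [apply: nnm_exp|apply: nnm_abs].
apply: frob_le => a b.
have e : \sum_(t < T) M ^+ t = invmx (1%:M - M) *m (1%:M - M ^+ T).
  by rewrite -geom mulKmx.
have hs : nnm (\sum_(t < T) M ^+ t *m absmx B).
  by apply: nnm_sum => t; apply: nnm_mul; [apply: nnm_exp|apply: nnm_abs].
rewrite ger0_norm // -mulmx_suml e mulmxBr mulmx1 mulmxBl.
rewrite [X in X <= _]mxE [X in _ + X <= _]mxE gerDl oppr_le0.
apply: nnm_mul; last exact: nnm_abs.
apply: nnm_mul => //; exact: nnm_exp.
Qed.
End PD.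

Section PE.
Variable R : realType.

Lemma mul_e n p (N : 'M[R]_(p, n)) q k : (N *m e_ q) k 0 = N k q.
Proof.
rewrite mxE (bigD1 q) //= big1 ?addr0; first by rewrite mxE !eqxx mulr1.
by move=> l hl; rewrite mxE (negbTE hl) mulr0.
Qed.

Lemma e_mul n p (N : 'M[R]_(n, p)) q k : ((e_ q)^T *m N) 0 k = N q k.
Proof.
rewrite mxE (bigD1 q) //= big1 ?addr0; first by rewrite !mxE !eqxx mul1r.
by move=> l hl; rewrite !mxE (negbTE hl) mul0r.
Qed.

Lemma e_mul_e n (N : 'M[R]_n) p q : ((e_ p)^T *m N *m e_ q) 0 0 = N p q.
Proof. by rewrite mul_e e_mul. Qed.

Lemma E_entry n (i j : 'I_n) a b :
  (e_ j *m (e_ i)^T : 'M[R]_n) a b = ((a == j) && (b == i))%:R.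
Proof.
rewrite mxE big_ord1 !mxE.
by case: (a == j); case: (b == i); rewrite /= ?mulr1 ?mul1r ?mulr0 ?mul0r.
Qed.

Lemma le_bigmax_seq (I : eqType) (r : seq I) (P : pred I) (F : I -> R) x0 i :
  i \in r -> P i -> F i <= \big[Num.max/x0]_(k <- r | P k) F k.
Proof.
elim: r => [//|a r IH]; rewrite inE big_cons => /orP [/eqP <-|hi] hP.
  by rewrite hP le_max lexx.
case: (P a); last exact: IH.
by rewrite le_max (IH hi hP) orbT.
Qed.

Lemma le_bigmax_fin (I : finType) (P : pred I) (F : I -> R) x0 i :
  P i -> F i <= \big[Num.max/x0]_(k | P k) F k.
Proof. by move=> hP; apply: le_bigmax_seq => //; rewrite mem_index_enum. Qed.

Lemma cauchy_schwarz (I : finType) (P : pred I) (f g : I -> R) :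
  (\sum_(k | P k) f k * g k) ^+ 2 <= (\sum_(k | P k) f k ^+ 2) * (\sum_(k | P k) g k ^+ 2).
Proof.
have h1 : \sum_(k | P k) \sum_(l | P l) f k ^+ 2 * g l ^+ 2 =
    (\sum_(k | P k) f k ^+ 2) * (\sum_(k | P k) g k ^+ 2).
  by rewrite mulr_suml; apply: eq_bigr => k _; rewrite mulr_sumr.
have h2 : \sum_(k | P k) \sum_(l | P l) f l ^+ 2 * g k ^+ 2 =
    (\sum_(k | P k) f k ^+ 2) * (\sum_(k | P k) g k ^+ 2).
  by rewrite exchange_big.
have e : (\sum_(k | P k) f k * g k) ^+ 2 =
    \sum_(k | P k) \sum_(l | P l) (f k * g k) * (f l * g l).
  by rewrite expr2 mulr_suml; apply: eq_bigr => k _; rewrite mulr_sumr.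
have e2 : \sum_(k | P k) \sum_(l | P l) (f k ^+ 2 * g l ^+ 2 + f l ^+ 2 * g k ^+ 2) / 2
   = (\sum_(k | P k) f k ^+ 2) * (\sum_(k | P k) g k ^+ 2).
  under eq_bigr => k _ do rewrite -mulr_suml big_split /=.
  by rewrite -mulr_suml big_split /= h1 h2; field.
rewrite e -e2; apply: ler_sum => k _; apply: ler_sum => l _.
have : 0 <= (f k * g l - f l * g k) ^+ 2 by apply: sqr_ge0.
set a := f k; set b := g l; set c := f l; set d := g k.
move=> h; rewrite ler_pdivlMr //; nra.
Qed.


Lemma cross_real (xi L Y2 P Q2 d : R) : 0 <= L -> L ^+ 2 = xi ^+ 2 + Y2 -> 0 <= Y2 ->
  0 <= P -> 0 <= Q2 -> d ^+ 2 <= Y2 * Q2 * P ->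
  2 * (xi * P + d) <= (xi + L) * (P + Q2).
Proof.
move=> hL hL2 hY hP hQ hd.
have h1 : 0 <= L - xi.
  rewrite leNgt; apply/negP => h.
  have : L ^+ 2 < xi ^+ 2 by rewrite -subr_lt0 subr_sqr; nra.
  lra.
have h2 : 0 <= L + xi.
  rewrite leNgt; apply/negP => h.
  have : L ^+ 2 < xi ^+ 2 by rewrite -subr_lt0 subr_sqr; nra.
  lra.
set A := (L - xi) * P + (L + xi) * Q2.
have hA : 0 <= A by rewrite /A; apply: addr_ge0; apply: mulr_ge0.
have hsq : (2 * d) ^+ 2 <= A ^+ 2.
  have e : A ^+ 2 = ((L - xi) * P - (L + xi) * Q2) ^+ 2 + 4 * (L ^+ 2 - xi ^+ 2) * P * Q2.
    by rewrite /A; ring.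
  rewrite e hL2 addrAC subrr add0r.
  have : 0 <= ((L - xi) * P - (L + xi) * Q2) ^+ 2 by apply: sqr_ge0.
  nra.
have h2d : 2 * d <= A.
  rewrite leNgt; apply/negP => h.
  have : A ^+ 2 < (2 * d) ^+ 2 by rewrite -subr_lt0 subr_sqr; nra.
  lra.
rewrite /A in h2d; nra.
Qed.
End PE.

Section PF.
Variable R : realType.
Variables (n m : nat) (A : 'M[R]_n) (B : 'M[R]_(n, m)) (i j : 'I_n) (w : R).
Hypothesis hij : i != j.
Let M0 := absmx A.
Let X := Xmx A.
Hypothesis hu0 : (1%:M - M0) \in unitmx.
Hypothesis hX : nnm X.
Let E : 'M[R]_n := e_ j *m (e_ i)^T.
Let Mt := M0 + `|w| *: E.
Hypothesis hut : (1%:M - Mt) \in unitmx.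
Hypothesis hXt : nnm (invmx (1%:M - Mt)).
Let Xt := invmx (1%:M - Mt).
Let d0 := 1 - `|w| * X i j.
Let a0 := `|w| / d0.

Lemma PX : (1%:M - M0) *m X = 1%:M.
Proof. by rewrite /X /Xmx mulmxV. Qed.

Lemma EXE : E *m X *m E = X i j *: E.
Proof.
rewrite /E.
have -> : e_ j *m (e_ i)^T *m X *m (e_ j *m (e_ i)^T) =
   e_ j *m (((e_ i)^T *m X *m e_ j) *m (e_ i)^T) by rewrite !mulmxA.
rewrite [(e_ i)^T *m X *m e_ j]mx11_scalar e_mul_e.
by rewrite mul_scalar_mx scalemxAr.
Qed.

Lemma d0_neq0 : d0 != 0.
Proof.
apply/eqP => h.
have hz : (1%:M - Mt) *m (X *m e_ j) = 0.
  rewrite /Mt opprD addrA mulmxBl mulmxA PX mul1mx -scalemxAl mulmxA.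
  have -> : E *m X *m e_ j = X i j *: e_ j.
    rewrite /E -!mulmxA (mulmxA (e_ i)^T) [(e_ i)^T *m X *m e_ j]mx11_scalar e_mul_e.
    by rewrite mul_mx_scalar.
  rewrite scalerA -{1}(scale1r (e_ j)) -scalerBl.
  by move: h; rewrite /d0 => ->; rewrite scale0r.
have hz2 : X *m e_ j = 0.
  by rewrite -(mulKmx hut (X *m e_ j)) hz mulmx0.
have : e_ j = (0 : 'cV[R]_n).
  by rewrite -(mul1mx (e_ j)) -PX -mulmxA hz2 mulmx0.
move/(congr1 (fun v : 'cV[R]_n => v j 0)); rewrite !mxE !eqxx /=.
by move/eqP; rewrite oner_eq0.
Qed.

Lemma Xt_eq : Xt = X + a0 *: (X *m E *m X).
Proof.
rewrite /Xt; apply: inv_eq.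
have h1 : 1%:M - Mt = (1%:M - M0) - `|w| *: E by rewrite /Mt opprD addrA.
have k0 : a0 - `|w| - `|w| * a0 * X i j = 0.
  have := d0_neq0; rewrite /a0 /d0 => hd; field; exact: hd.
have t1 : (1%:M - M0) *m (a0 *: (X *m E *m X)) = a0 *: (E *m X).
  by rewrite -scalemxAr mulmxA mulmxA PX mul1mx.
have t2 : (`|w| *: E) *m (a0 *: (X *m E *m X)) = (`|w| * a0 * X i j) *: (E *m X).
  rewrite -scalemxAl -scalemxAr scalerA mulmxA mulmxA EXE -scalemxAl scalerA.
  by rewrite [`|w| * a0]mulrC.
rewrite h1 mulmxBl !mulmxDr PX t1 t2 -scalemxAl -addrA.
have -> : a0 *: (E *m X) - (`|w| *: (E *m X) + (`|w| * a0 * X i j) *: (E *m X))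
   = (a0 - `|w| - `|w| * a0 * X i j) *: (E *m X).
  by rewrite !scalerBl opprD addrA.
by rewrite k0 scale0r addr0.
Qed.


Lemma PEQ_entry p q (P : 'M[R]_(p, n)) (Q : 'M[R]_(n, q)) a b :
  (P *m E *m Q) a b = P a j * Q i b.
Proof.
rewrite /E mulmxA -(mulmxA P) (mulmxA P (e_ j)) -(mulmxA (P *m e_ j)).
by rewrite mxE big_ord1 mul_e e_mul.
Qed.

Lemma X_eq : X = 1%:M + M0 *m X.
Proof. by rewrite -PX mulmxBl mul1mx subrK. Qed.

Lemma X_diag a : 1 <= X a a.
Proof.
have := congr1 (fun N : 'M[R]_n => N a a) X_eq; rewrite /= !mxE eqxx /= => ->.
rewrite lerDl sumr_ge0 // => k _.
apply: mulr_ge0; [by rewrite /M0 mxE | exact: hX].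
Qed.

Lemma a0_ge0 : 0 <= a0.
Proof.
have hd : `|w| *: (Xt *m E *m X) = Xt - X.
  have hE : `|w| *: E = (1%:M - M0) - (1%:M - Mt).
    by rewrite /Mt; apply/matrixP => a b; rewrite !mxE; ring.
  rewrite scalemxAl scalemxAr hE mulmxBr mulmxBl -mulmxA PX mulmx1.
  by rewrite /Xt mulVmx // mul1mx.
have e1 : (Xt - X) j i = a0 * (X j j * X i i).
  by rewrite {1}Xt_eq addrC addKr mxE PEQ_entry.
have e2 : 0 <= (Xt - X) j i.
  rewrite -hd mxE PEQ_entry mulr_ge0 //; apply: mulr_ge0; [exact: hXt| exact: hX].
rewrite e1 in e2.
have hp : 0 < X j j * X i i.
  by apply: mulr_gt0; apply: lt_le_trans (X_diag _).
by move: e2 hp; set p := X j j * X i i; nra.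
Qed.

Let V := X *m absmx B.
Let x a := X a j.
Let rho b := V i b.

Lemma XtB_entry a b : (Xt *m absmx B) a b = V a b + a0 * (x a * rho b).
Proof.
rewrite Xt_eq mulmxDl -scalemxAl mxE [X in _ + X]mxE.
by rewrite -(mulmxA (X *m E)) PEQ_entry.
Qed.

Let S := frob V.
Let U := \sum_a x a ^+ 2.
Let P := \sum_b rho b ^+ 2.
Let c := \sum_a \sum_b V a b * (x a * rho b).

Lemma frob_expand : frob (Xt *m absmx B) = S + 2 * a0 * c + a0 ^+ 2 * (U * P).
Proof.
have pw : forall a b, (Xt *m absmx B) a b ^+ 2 =
   V a b ^+ 2 + 2 * a0 * (V a b * (x a * rho b)) + a0 ^+ 2 * (x a ^+ 2 * rho b ^+ 2).
  by move=> a b; rewrite XtB_entry; ring.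
rewrite /frob.
under eq_bigr => a _ do under eq_bigr => b _ do rewrite pw.
under eq_bigr => a _ do rewrite big_split big_split /=.
rewrite big_split big_split /=.
congr (_ + _ + _).
  by rewrite /c mulr_sumr; apply: eq_bigr => a _; rewrite mulr_sumr.
rewrite /U /P mulr_suml mulr_sumr; apply: eq_bigr => a _.
by rewrite mulr_sumr mulr_sumr; apply: eq_bigr => b _; rewrite mulrA.
Qed.

Let L := colnorm A j.

Lemma U_ge0 : 0 <= U. Proof. by rewrite sumr_ge0 // => a _; rewrite sqr_ge0. Qed.
Lemma P_ge0 : 0 <= P. Proof. by rewrite sumr_ge0 // => a _; rewrite sqr_ge0. Qed.
Lemma S_ge0 : 0 <= S.
Proof. by rewrite sumr_ge0 // => a _; rewrite sumr_ge0 // => b _; rewrite sqr_ge0. Qed.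

Lemma L_eq : L = Num.sqrt U.
Proof. by rewrite /L /colnorm; congr Num.sqrt; apply: eq_bigr => k _; rewrite mul_e. Qed.

Lemma cross_bound : 2 * c <= (x i + L) * S.
Proof.
pose W b := \sum_(a | a != i) x a * V a b.
pose d := \sum_b rho b * W b.
have ec : c = x i * P + d.
  rewrite /c exchange_big /= /P /d mulr_sumr -big_split /=.
  apply: eq_bigr => b _; rewrite (bigD1 i) //= /W mulr_sumr.
  congr (_ + _); first by rewrite /rho; ring.
  by apply: eq_bigr => a _; rewrite /rho; ring.
pose Y2 := \sum_(a | a != i) x a ^+ 2.
pose Q2 := \sum_b \sum_(a | a != i) V a b ^+ 2.
have eU : U = x i ^+ 2 + Y2 by rewrite /U (bigD1 i).
have eS : S = P + Q2.
  rewrite /S /frob exchange_big /= /P /Q2 -big_split /=.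
  by apply: eq_bigr => b _; rewrite (bigD1 i).
have hY : 0 <= Y2 by rewrite sumr_ge0 // => a _; rewrite sqr_ge0.
have hQ : 0 <= Q2.
  by rewrite sumr_ge0 // => b _; rewrite sumr_ge0 // => a _; rewrite sqr_ge0.
have hW : \sum_b W b ^+ 2 <= Y2 * Q2.
  rewrite /Q2 mulr_sumr; apply: ler_sum => b _; exact: cauchy_schwarz.
have hd : d ^+ 2 <= Y2 * Q2 * P.
  apply: le_trans (cauchy_schwarz predT rho W) _.
  by rewrite mulrC; apply: ler_wpM2r => //; rewrite sumr_ge0 // => ? _; apply: sqr_ge0.
have hL : 0 <= L by rewrite L_eq sqrtr_ge0.
have hL2 : L ^+ 2 = x i ^+ 2 + Y2 by rewrite L_eq sqr_sqrtr ?U_ge0 // eU.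
rewrite ec eS; apply: (@cross_real R (x i) L Y2 P Q2 d) => //; exact: P_ge0.
Qed.

Lemma frob_tau : frob (Xt *m absmx B) <=
  (1 + alpha A w i j * beta A i j) * \tr (HX A B)
  + alpha A w i j ^+ 2 * gamma A i * gammabar A B i.
Proof.
set al := alpha A w i j; set be := beta A i j.
have hal : a0 <= al.
  have h := @le_bigmax_fin R _ (fun pq : 'I_n * 'I_n => pq.1 != pq.2)
     (fun pq => alpha_pq A w pq.1 pq.2) (alpha_pq A w j i) (i, j) hij.
  by move: h; rewrite /= /alpha_pq /Xent e_mul_e.
have hxi : 0 <= x i by apply: hX.
have hL : 0 <= L by rewrite L_eq sqrtr_ge0.
have hbe : x i + L <= be.
  rewrite /be /beta le_max; apply/orP; right; apply: lerD.
    have h := @le_bigmax_fin R _ (fun pq : 'I_n * 'I_n => pq.1 != pq.2)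
       (fun pq => Xent A pq.1 pq.2) (Xent A j i) (i, j) hij.
    by move: h; rewrite /= {1}/Xent e_mul_e.
  exact: (@le_bigmax_fin R _ xpredT (fun q => colnorm A q) (colnorm A i) j).
have hga : U <= gamma A i.
  have h := @le_bigmax_fin R _ xpredT
    (fun k => ((e_ k)^T *m (Xmx A)^T *m Xmx A *m e_ k) 0 0)
    (((e_ i)^T *m (Xmx A)^T *m Xmx A *m e_ i) 0 0) j isT.
  apply: le_trans h; rewrite -(mulmxA _ (Xmx A)^T) e_mul_e mxE /U.
  by apply: ler_sum => k _; rewrite mxE /x /X expr2.
have hgb : P <= gammabar A B i.
  have h := @le_bigmax_fin R _ xpredT
    (fun k => ((e_ k)^T *m Xmx A *m absmx B *m (absmx B)^T *m (Xmx A)^T *m e_ k) 0 0)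
    (((e_ i)^T *m Xmx A *m absmx B *m (absmx B)^T *m (Xmx A)^T *m e_ i) 0 0) i isT.
  apply: le_trans h.
  have -> : (e_ i)^T *m Xmx A *m absmx B *m (absmx B)^T *m (Xmx A)^T *m e_ i
     = (e_ i)^T *m (V *m V^T) *m e_ i by rewrite /V trmx_mul !mulmxA.
  rewrite e_mul_e mxE /P.
  by apply: ler_sum => k _; rewrite /rho [V^T _ _]mxE expr2.
have hS : \tr (HX A B) = S.
  by rewrite /HX /S -tr_frob /V trmx_mul !mulmxA.
rewrite frob_expand hS.
have hS0 := S_ge0; have hU := U_ge0; have hP := P_ge0.
have ha0 := a0_ge0.
have hcb := cross_bound.
have h1 : 2 * a0 * c <= al * be * S.
  have e1 : 2 * a0 * c = a0 * (2 * c) by ring.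
  rewrite e1 -mulrA.
  apply: (@le_trans _ _ (a0 * (be * S))).
    apply: ler_wpM2l => //; apply: le_trans hcb _; exact: ler_wpM2r.
  apply: ler_wpM2r => //; apply: mulr_ge0 => //; apply: le_trans hbe.
  exact: addr_ge0.
have h2 : a0 ^+ 2 * (U * P) <= al ^+ 2 * gamma A i * gammabar A B i.
  rewrite -mulrA; apply: ler_pM.
  - exact: sqr_ge0.
  - exact: mulr_ge0.
  - by rewrite lerXn2r // ?nnegrE // (le_trans ha0).
  - by apply: ler_pM.
have e : (1 + al * be) * S + al ^+ 2 * gamma A i * gammabar A B i =
   S + al * be * S + al ^+ 2 * gamma A i * gammabar A B i by ring.
rewrite e; apply: lerD => //; apply: lerD => //.
Qed.
End PF.

Section PG.
Variable R : realType.

Definition pd n (G : 'M[R]_n) := forall x : 'cV_n, x != 0 -> 0 < (x^T *m G *m x) 0 0.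

Lemma e_neq0 n (k : 'I_n) : (e_ k : 'cV[R]_n) != 0.
Proof.
apply/negP => /eqP/(congr1 (fun v : 'cV[R]_n => v k 0)); rewrite !mxE !eqxx /=.
by move/eqP; rewrite oner_eq0.
Qed.

Lemma pd_diag n (G : 'M[R]_n) k : pd G -> 0 < G k k.
Proof. by move=> h; rewrite -e_mul_e; apply: h; apply: e_neq0. Qed.

Lemma schur_key n (a0 : R) (b : 'rV[R]_n) (D : 'M[R]_n) : a0 != 0 ->
  let L : 'M[R]_(1 + n) := block_mx 1%:M 0 (- a0^-1 *: b^T) 1%:M in
  L *m block_mx a0%:M b b^T D *m L^T =
  block_mx a0%:M 0 0 (D - a0^-1 *: (b^T *m b)).
Proof.
move=> ha L; rewrite /L tr_block_mx !trmx1 trmx0 !mulmx_block.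
rewrite !mul1mx !mul0mx !mulmx1 !mulmx0 !addr0.
rewrite mul_mx_scalar scalerA mulrN mulfV // scaleN1r addNr mul0mx add0r.
have -> : (- a0^-1 *: b^T)^T = - a0^-1 *: b by rewrite linearZ /= trmxK.
rewrite mul_scalar_mx scalerA mulrN mulfV // scaleN1r addNr.
by rewrite -scalemxAl scaleNr addrC.
Qed.

Lemma hadamard n (G : 'M[R]_n) : G^T = G -> pd G ->
  0 < \det G /\ \det G <= \prod_k G k k.
Proof.
elim: n G => [|n IH] G hs hp.
  by rewrite det_mx00 big_ord0; split; [exact: ltr01 | exact: lexx].
pose G' : 'M[R]_(1 + n) := G.
have eG : G' = block_mx (ulsubmx G') (ursubmx G') (dlsubmx G') (drsubmx G').
  by rewrite submxK.
set a := ulsubmx G' in eG; set b := ursubmx G' in eG.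
set c := dlsubmx G' in eG; set D := drsubmx G' in eG.
have hc : c = b^T by rewrite /b trmx_ursub /c /G' hs.
have hD : D^T = D by rewrite /D trmx_drsub /G' hs.
set a0 := a 0 0.
have ha : a = a0%:M by rewrite {1}[a]mx11_scalar.
have ha0 : 0 < a0.
  have := pd_diag (ord0 : 'I_n.+1) hp.
  rewrite /a0 /a !mxE.
  by have -> : lshift n (0 : 'I_1) = (ord0 : 'I_(1 + n)) by apply/val_inj.
have ha0' : a0 != 0 by rewrite gt_eqF.
pose S := D - a0^-1 *: (b^T *m b).
pose L : 'M[R]_(1 + n) := block_mx 1%:M 0 (- a0^-1 *: b^T) 1%:M.
have key : L *m G' *m L^T = block_mx a0%:M 0 0 S.
  by rewrite eG ha hc; apply: schur_key.
have hL : \det L = 1 by rewrite /L det_lblock !det1 mulr1.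
have hdet : \det G' = a0 * \det S.
  have := congr1 determinant key.
  rewrite !det_mulmx det_tr hL mul1r mulr1 det_ublock det_mx11 mxE eqxx /=.
  by rewrite mulr1n.
have hLu : L^T \in unitmx by rewrite unitmxE det_tr hL unitr1.
have hSs : S^T = S.
  by rewrite /S linearB /= linearZ /= trmx_mul trmxK hD.
have hSp : pd S.
  move=> y hy.
  pose z : 'cV[R]_(1 + n) := col_mx 0 y.
  have hz : L^T *m z != 0.
    apply/negP => /eqP h0; move/negP: hy; apply; apply/eqP.
    have : z = 0 by rewrite -(mulKmx hLu z) h0 mulmx0.
    by move/eqP; rewrite /z -col_mx0 => /eqP /eq_col_mx [].
  have := hp _ hz.
  rewrite trmx_mul trmxK.
  have -> : z^T *m L *m G *m (L^T *m z) = z^T *m (L *m G' *m L^T) *m z.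
    by rewrite !mulmxA.
  rewrite key /z tr_col_mx trmx0 mul_row_block !mul0mx !mulmx0 !addr0 add0r.
  by rewrite mul_row_col mul0mx add0r.
have [hS1 hS2] := IH S hSs hSp.
have hSD : forall k, S k k <= D k k.
  move=> k; rewrite /S !mxE lerBlDr lerDl; apply: mulr_ge0.
    by rewrite invr_ge0 ltW.
  by rewrite big_ord1 !mxE -expr2 sqr_ge0.
have hprod : \prod_(k < n.+1) G k k = a0 * \prod_(k < n) D k k.
  rewrite big_ord_recl; congr (_ * _).
    rewrite /a0 /a !mxE.
    by have -> : lshift n (0 : 'I_1) = (ord0 : 'I_(1 + n)) by apply/val_inj.
  apply: eq_bigr => k _; rewrite /D !mxE.
  by have -> : rshift 1 k = lift ord0 k by apply/val_inj.
change (0 < \det G' /\ \det G' <= \prod_(k < n.+1) G k k).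
rewrite hdet hprod; split; first exact: mulr_gt0.
apply: ler_wpM2l; first exact: ltW.
apply: le_trans hS2 _; apply: ler_prod => k _; rewrite hSD andbT.
exact: ltW (pd_diag k hSp).
Qed.
End PG.

Section PH.
Variable R : realType.

Lemma amgm_tr n (G : 'M[R]_n) : (forall k, 0 <= G k k) ->
  \prod_k G k k <= (\tr G / n%:R) ^+ n.
Proof.
move=> h.
have := @leif_AGM R 'I_n predT (fun k => G k k).
rewrite /= card_ord => H.
have := H (fun k _ => h k); move=> [] H1 _.
exact: H1.
Qed.

Lemma ln_det_le n (G : 'M[R]_n) : (0 < n)%N -> G^T = G -> pd G ->
  ln (\det G) <= n%:R * ln (\tr G / n%:R) /\ 0 < \tr G.
Proof.
move=> hn hs hp.
have [hd1 hd2] := hadamard hs hp.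
have htr : 0 < \tr G.
  case: n G hn hs hp {hd1 hd2} => [//|n] G _ _ hp.
  rewrite /mxtrace big_ord_recl ltr_pwDl ?pd_diag //.
  by rewrite sumr_ge0 // => k _; apply: ltW; apply: pd_diag.
split => //.
have hq : 0 < \tr G / n%:R by rewrite divr_gt0 // ltr0n.
have hag := amgm_tr (fun k => ltW (pd_diag k hp)).
rewrite mulr_natl -lnXn // ler_ln ?posrE ?exprn_gt0 //.
exact: le_trans hd2 hag.
Qed.

Lemma bound_ge n (t x : R) : (0 < n)%N -> 0 < t -> t <= x ->
  n%:R * ln (t / n%:R) <= bound n (sigma_of x) x.
Proof.
move=> hn ht htx.
have hx : 0 < x by apply: lt_le_trans htx.
have hn' : 0 < n%:R :> R by rewrite ltr0n.
have hlt : ln t <= ln x by rewrite ler_ln ?posrE.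
rewrite /bound /sigma_of lnM ?posrE ?invr_gt0 // lnV ?posrE //.
case: ifP => hx1.
  rewrite invr1 powRr1 ?ler0n // lnM ?posrE ?invr_gt0 // lnV ?posrE // mul1r.
  by apply: ler_wpM2l; [exact: ltW | lra].
rewrite lnM ?posrE ?invr_gt0 ?powR_gt0 // lnV ?posrE ?powR_gt0 // ln_powR.
have hlx : 0 <= ln x by apply: ln_ge0; rewrite ltW // ltNge hx1.
have e : 2 * n%:R * (ln x + - (2^-1 * ln n%:R)) = n%:R * (2 * ln x - ln n%:R).
  by field.
rewrite e; apply: ler_wpM2l; [exact: ltW | lra].
Qed.

Lemma gram_sym n m T (Z : 'M[R]_n) (B : 'M[R]_(n, m)) :
  (gramian T Z B)^T = gramian T Z B.
Proof.
rewrite gram_eq linear_sum /=; apply: eq_bigr => t _.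
by rewrite trmx_mul trmxK.
Qed.

Lemma cv_sq n (y : 'cV[R]_n) : (y^T *m y) 0 0 = \sum_k y k 0 ^+ 2.
Proof. by rewrite mxE; apply: eq_bigr => k _; rewrite mxE expr2. Qed.

Lemma gram_pd n m T (Z : 'M[R]_n) (B : 'M[R]_(n, m)) :
  controllable T Z B -> pd (gramian T Z B).
Proof.
move=> hc x hx.
pose y (t : 'I_T) := (Z ^+ t *m B)^T *m x.
have ev : (x^T *m gramian T Z B *m x) 0 0 = \sum_t \sum_k y t k 0 ^+ 2.
  rewrite gram_eq mulmx_sumr mulmx_suml summxE; apply: eq_bigr => t _.
  by rewrite -cv_sq /y !trmx_mul !trmxK !mulmxA.
rewrite ev lt_neqAle; apply/andP; split; last first.
  by rewrite sumr_ge0 // => t _; rewrite sumr_ge0 // => k _; rewrite sqr_ge0.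
apply/eqP => h0; move/negP: hx; apply; apply/eqP.
have hy : forall t, y t = 0.
  move=> t; apply/matrixP => k l; rewrite (ord1 l).
  have h1 : \sum_k y t k 0 ^+ 2 = 0.
    apply: (@psumr_eq0P _ _ xpredT (fun t => \sum_k y t k 0 ^+ 2)) (esym h0) t isT.
    by move=> t' _; rewrite sumr_ge0 // => k' _; rewrite sqr_ge0.
  have h2 : y t k 0 ^+ 2 = 0.
    apply: (@psumr_eq0P _ _ xpredT (fun k => y t k 0 ^+ 2)) h1 k isT.
    by move=> k' _; rewrite sqr_ge0.
  have -> : y t k 0 = 0 by apply/eqP; rewrite -sqrf_eq0 h2.
  by rewrite mxE.
have hsub : (x^T <= \sum_(t < T) <<(Z ^+ t *m B)^T>>)%MS by apply: submx_full.
case/sub_sumsmxP: hsub => u hu.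
have hxx : x^T *m x = 0.
  rewrite hu mulmx_suml big1 // => t _.
  have : (<<(Z ^+ t *m B)^T>> <= (Z ^+ t *m B)^T)%MS by rewrite genmxE.
  case/submxP => D ->.
  by rewrite -!mulmxA; have := hy t; rewrite /y => ->; rewrite !mulmx0.
apply/matrixP => k l; rewrite (ord1 l) mxE.
have := congr1 (fun M : 'M[R]_1 => M 0 0) hxx; rewrite /= cv_sq mxE => h.
have h2 : x k 0 ^+ 2 = 0.
  apply: (@psumr_eq0P _ _ xpredT (fun k => x k 0 ^+ 2)) h k isT.
  by move=> k' _; rewrite sqr_ge0.
by apply/eqP; rewrite -sqrf_eq0 h2.
Qed.
End PH.

Lemma bound_mono (R : realType) n (sg x y : R) : (0 < n)%N -> 0 <= sg -> 0 < x -> x <= y ->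
  bound n sg x <= bound n sg y.
Proof.
move=> hn hsg hx hxy; rewrite /bound.
have hc : 0 < n%:R `^ sg^-1 :> R by rewrite powR_gt0 // ltr0n.
apply: ler_wpM2l; first by rewrite mulr_ge0 // ler0n.
rewrite ler_ln ?posrE ?divr_gt0 //; last exact: lt_le_trans hxy.
by rewrite ler_pM2r // invr_gt0.
Qed.

Lemma le_abs_add (R : realType) n (A E : 'M[R]_n) w : nnm E ->
  le_abs (A + w *: E) (absmx A + `|w| *: E).
Proof.
move=> hE a b; rewrite !mxE; apply: (le_trans (ler_normD _ _)).
by apply: lerD => //; rewrite normrM (ger0_norm (hE a b)).
Qed.

Lemma sigma_ge0 (R : realType) (x : R) : 0 <= sigma_of x.
Proof. by rewrite /sigma_of; case: ifP. Qed.

Unset Implicit Arguments.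

Theorem theorem5p3 (R : realType) (n m T : nat)
  (A : 'M[R]_n) (B : 'M[R]_(n, m)) (i j : 'I_n) (w : R) :
  spectral_radius (absmx A) < 1 ->
  (0 < T)%N ->
  i != j ->
  spectral_radius (absmx A + `|w| *: (e_ j *m (e_ i)^T)) < 1 ->
  controllable T A B ->
  controllable T (A + w *: (e_ j *m (e_ i)^T)) B ->
  let WA := gramian T A B in
  let sA := sigma_of (\tr WA) in
  let tau := (1 + alpha A w i j * beta A i j) * \tr (HX A B)
             + alpha A w i j ^+ 2 * gamma A i * gammabar A B i in
  let st := sigma_of tau in
  ln (\det WA) <= bound n sA (\tr WA) /\
  bound n sA (\tr WA) <= bound n sA (\tr (HX A B)) /\
  ln (\det (gramian T (A + w *: (e_ j *m (e_ i)^T)) B)) <= bound n st tau.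
Proof.
move=> hsr hT hij hsr2 hc1 hc2 WA sA tau st.
have hn : (0 < n)%N by apply: leq_ltn_trans (leq0n i) (ltn_ord i).
set E : 'M[R]_n := e_ j *m (e_ i)^T.
have hEnn : nnm E by move=> a b; rewrite /E E_entry ler0n.
pose M0 := absmx A.
have hM0 : nnm M0 by apply: nnm_abs.
have hU0 : forall s, 1 <= s -> (s%:M - M0) \in unitmx.
  by move=> s hs; exact: (sr_unit hsr hs).
have hu0 := hU0 1 (lexx _).
have hX : nnm (invmx (1%:M - M0)) := good1 hM0 hU0.
pose Mt := M0 + `|w| *: E.
have hMt : nnm Mt.
  by move=> a b; rewrite /Mt mxE addr_ge0 // ?hM0 // mxE mulr_ge0.
have hUt : forall s, 1 <= s -> (s%:M - Mt) \in unitmx.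
  by move=> s hs; exact: (sr_unit hsr2 hs).
have hut := hUt 1 (lexx _).
have hXt : nnm (invmx (1%:M - Mt)) := good1 hMt hUt.
have [hl1 htr1] := ln_det_le hn (gram_sym T A B) (gram_pd hc1).
have hHX : \tr (HX A B) = frob (invmx (1%:M - M0) *m absmx B).
  by rewrite /HX -tr_frob trmx_mul !mulmxA.
have htrle : \tr WA <= \tr (HX A B).
  rewrite hHX; apply: gram_trace_bound => //; exact: le_abs_abs.
split; first by apply: le_trans hl1 _; apply: bound_ge.
split; first by apply: bound_mono => //; apply: sigma_ge0.
have [hl2 htr2] := ln_det_le hn (gram_sym T (A + w *: E) B) (gram_pd hc2).
have hle : le_abs (A + w *: E) Mt by apply: le_abs_add.
have htr3 : \tr (gramian T (A + w *: E) B) <= tau.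
  apply: le_trans (gram_trace_bound T B hle hut hXt) _.
  by apply: frob_tau.
by apply: le_trans hl2 _; apply: bound_ge.
Qed.
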